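(* For every connected chordal graph $\hat G$ on $n$ vertices with maximum degree $\Delta$, $\mathrm{OPT}(\hat G)=O(\Delta^2 n\log n)$.
   Context: Let $\hat G=(V,\hat E)$ be a connected unweighted graph with shortest-path metric $\hat\delta$. Let $\widehat{\mathit{NE}}$ be the set of unordered pairs $\{a,b\}$ of distinct vertices with $\{a,b\}\notin\hat E$. For $(u,v)\in V^2$, let $S_{u,v}$ be the set of $\{a,b\}\in\widehat{\mathit{NE}}$ such that $\hat\delta(u,a)+\hat\delta(b,v)+1<\hat\delta(u,v)$ or $\hat\delta(u,b)+\hat\delta(a,v)+1<\hat\delta(u,v)$. Define $\mathrm{OPT}(\hat G)$ as the minimum cardinality of a set $T\subseteq V\times V$ such that $\bigcup_{(u,v)\in T}S_{u,v}=\widehat{\mathit{NE}}$. A graph is chordal if every cycle of length greater than three has a chord. *)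

(* Defs.v *)
From mathcomp Require Import all_boot.
Set Implicit Arguments. Unset Strict Implicit. Unset Printing Implicit Defensive.

(* A simple graph on a finite vertex type T: symmetric irreflexive relation e. *)
Section Graph.
Variables (T : finType) (e : rel T).

Definition connected_graph : Prop := forall u v : T, connect e u v.

Fixpoint ball (u : T) (k : nat) : {set T} :=
  match k with
  | 0 => [set u]
  | k'.+1 => ball u k' :|: [set y | [exists x in ball u k', e x y]]
  end.

(* shortest-path distance (correct when the graph is connected) *)
Definition dist (u v : T) : nat :=
  find (fun k => v \in ball u k) (iota 0 #|T|).

Definition is_cycle (c : seq T) : bool := uniq c && cycle e c.

Definition has_chord (c : seq T) : bool :=
  [exists x : T, exists y : T,
     [&& x \in c, y \in c, e x y, y != next c x & x != next c y]].

Definition chordal : Prop :=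
  forall c : seq T, is_cycle c -> 3 < size c -> has_chord c.

Definition max_degree : nat := \max_(v : T) #|[set w | e v w]|.

Definition NE : {set {set T}} :=
  [set P : {set T} | [exists a : T, exists b : T,
     [&& P == [set a; b], a != b & ~~ e a b]]].

Definition S (u v : T) : {set {set T}} :=
  [set P in NE | [exists a : T, exists b : T,
     (P == [set a; b]) &&
     ((dist u a + dist b v + 1 < dist u v) || (dist u b + dist a v + 1 < dist u v))]].

Definition covers (X : {set T * T}) : bool :=
  \bigcup_(p in X) S p.1 p.2 == NE.

Definition OPT : nat := \big[minn/#|T|.+1 ^ 2]_(X : {set T * T} | covers X) #|X|.

End Graph.

(* Main.v *)
Require Import Defs.
From mathcomp Require Import all_boot zify.
From Stdlib Require Import Classical.
Set Implicit Arguments. Unset Strict Implicit. Unset Printing Implicit Defensive.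

Ltac arith :=
  repeat match goal with
  | H : ?P |- _ =>
      lazymatch P with
      | is_true (leq _ _) => fail
      | is_true (andb _ _) => fail
      | is_true (negb (leq _ _)) => fail
      | @eq ?A _ _ => tryif (unify A nat) then fail else clear H
      | ~ @eq ?A _ _ => tryif (unify A nat) then fail else clear H
      | @eq ?A _ _ -> False => tryif (unify A nat) then fail else clear H
      | _ => clear H
      end
  end; lia.

Section Walks.
Variables (T : finType) (e : rel T).
Hypothesis esym : symmetric e.
Hypothesis eirr : irreflexive e.
Hypothesis econ : connected_graph e.

Definition walk (p : nat -> T) (m : nat) := forall i, i < m -> e (p i) (p i.+1).

Lemma walk_prefix p m i : walk p m -> i <= m -> walk p i.
Proof. by move=> w lim j ji; apply: w; arith. Qed.

Lemma ballP u k v :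
  reflect (exists m p, [/\ m <= k, p 0 = u, p m = v & walk p m]) (v \in ball e u k).
Proof.
apply: (iffP idP).
- elim: k v => [|k IH] v /=.
    rewrite inE => /eqP ->; exists 0, (fun _ => u); split => // i; arith.
  rewrite inE => /orP [/IH [m [p [mk p0 pm w]]]|].
    by exists m, p; split => //; arith.
  rewrite inE => /existsP [x /andP [xb exv]].
  have [m [p [mk p0 pm w]]] := IH _ xb.
  exists m.+1, (fun i => if i <= m then p i else v); split => //.
  + by rewrite ltnn.
  move=> i im; case: (ltngtP i m) => [ilt|//|->].
  - rewrite ?(ltnW ilt) ?ilt; apply: w; done.
  - arith.
  - rewrite ?leqnn ?ltnn; rewrite ?pm; done.
- elim: k v => [|k IH] v [m [p [mk p0 pm w]]] /=.
    have m0 : m = 0 by arith.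
    by rewrite inE -pm m0 p0.
  rewrite inE; case: (leqP m k) => mk'.
    by rewrite IH //; exists m, p.
  have m1 : m = k.+1 by arith.
  apply/orP; right; rewrite inE; apply/existsP; exists (p k).
  rewrite IH; last by exists k, p; split => //; apply: walk_prefix w _; arith.
  by rewrite -pm m1; apply: w; arith.
Qed.

Lemma dist_le u v m p : p 0 = u -> p m = v -> walk p m -> dist e u v <= m.
Proof.
move=> p0 pm w.
have vb : v \in ball e u m by apply/ballP; exists m, p.
rewrite /dist; case: (ltnP m #|T|) => mT.
  rewrite leqNgt; apply/negP => /(before_find 0).
  by rewrite nth_iota // add0n vb.
apply: leq_trans mT; move: (find_size (fun k => v \in ball e u k) (iota 0 #|T|)).
by rewrite size_iota.
Qed.

Lemma connect_walk x y : connect e x y ->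
  exists m p, [/\ m < #|T|, p 0 = x, p m = y & walk p m].
Proof.
move=> /connectP [s ps ->].
case: (shortenP ps) => s' ps' us' _.
exists (size s'), (fun i => nth x (x :: s') i); split => //.
- by move: (card_uniqP us') => /= <-; rewrite max_card.
- by rewrite (last_nth x).
- by move=> i im; move/(pathP x): ps' => /(_ i im).
Qed.

Lemma dist_geo u v : exists p, [/\ p 0 = u, p (dist e u v) = v & walk p (dist e u v)].
Proof.
have [m0 [p0 [m0T p0u p0v w0]]] := connect_walk (econ u v).
have vb : v \in ball e u m0 by apply/ballP; exists m0, p0.
have hs : has (fun k => v \in ball e u k) (iota 0 #|T|).
  by apply/hasP; exists m0 => //; rewrite mem_iota.
have := nth_find 0 hs; rewrite -/(dist e u v).
have dT : dist e u v < #|T| by rewrite /dist; move: hs; rewrite has_find size_iota.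
rewrite nth_iota // add0n => /ballP [m [p [md pu pv w]]].
have := dist_le pu pv w => dm.
have -> : dist e u v = m by arith.
by exists p.
Qed.

Lemma dist0 u : dist e u u = 0.
Proof. apply/eqP; rewrite -leqn0; apply: (@dist_le u u 0 (fun _ => u)) => // i; arith. Qed.

Lemma dist_ge2 a b : a != b -> ~~ e a b -> 1 < dist e a b.
Proof.
move=> ab nab; have [p [pa pb w]] := dist_geo a b.
case Hd: (dist e a b) => [|[|d]] //; rewrite Hd in pb w.
- by move: ab; rewrite -pa -pb eqxx.
- by move: nab; rewrite -pa -pb w.
Qed.

End Walks.
Section Chordless.
Variables (T : finType) (e : rel T).
Hypothesis esym : symmetric e.
Hypothesis eirr : irreflexive e.
Hypothesis echord : chordal e.

Lemma no_chordless (f : nat -> T) L : 3 < L ->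
  (forall i l, i < l < L -> f i = f l -> False) ->
  (forall i l, i < l < L -> e (f i) (f l) = (l == i.+1) || ((i == 0) && (l == L.-1))) ->
  False.
Proof.
move=> L3 finj fe.
have finj' : forall i l, i < L -> l < L -> f i = f l -> i = l.
  move=> i l iL lL fil; case: (ltngtP i l) => // [il|li].
  - by case: (finj i l) => //; rewrite il lL.
  - by case: (finj l i) => //; rewrite li iL.
set c := mkseq f L.
have uc : uniq c.
  rewrite /c /mkseq map_inj_in_uniq ?iota_uniq //.
  by move=> i l; rewrite !mem_iota !add0n => /andP [_ iL] /andP [_ lL]; apply: finj'.
have sc : size c = L by rewrite size_mkseq.
have nthc : forall i, i < L -> nth (f 0) c i = f i by move=> i iL; rewrite nth_mkseq.
have cyc : cycle e c.
  rewrite (cycle_path (f 0)); apply/(pathP (f 0)) => i; rewrite sc => iL.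
  rewrite nthc //; case: i iL => [|i] iL /=.
    rewrite (last_nth (f 0)) -/c.
    have -> : nth (f 0) (f 0 :: c) (size c) = f L.-1.
      rewrite sc; have {1}-> : L = L.-1.+1 by arith.
      by rewrite /= nthc //; arith.
    rewrite esym fe; last by arith.
    by rewrite eqxx /= ?orbT; apply/orP; right; apply/eqP; arith.
  by rewrite nthc; [rewrite fe ?eqxx //; arith | arith].
have := echord (c := c); rewrite /is_cycle uc cyc sc => /(_ isT L3).
case/existsP => x /existsP [y /and5P [xc yc exy ynx xny]].
have memc : forall z, z \in c -> exists2 i, i < L & z = f i.
  by move=> z /mapP [i]; rewrite mem_iota add0n => /andP [_ iL] ->; exists i.
have cE : c = f 0 :: mkseq (fun i => f i.+1) L.-1.
  apply: (@eq_from_nth _ (f 0)); first by rewrite sc /= size_mkseq; arith.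
  rewrite sc => -[|i] iL /=; first by rewrite nthc.
  by rewrite nthc // nth_mkseq //; arith.
have nextc : forall i, i < L -> next c (f i) = if i < L.-1 then f i.+1 else f 0.
  move=> i iL; rewrite next_nth -(nthc i iL) mem_nth ?sc //.
  rewrite (index_uniq _ _ uc) ?sc //.
  rewrite cE /=; case: ltnP => iL'; first by rewrite nth_mkseq.
  by rewrite nth_default // size_mkseq.
case: (memc x xc) => i iL xi; case: (memc y yc) => l lL yl; subst x y.
rewrite !nextc // in ynx xny.
have key : forall i l, i < l < L -> e (f i) (f l) ->
    (f l == (if i < L.-1 then f i.+1 else f 0)) || (f i == (if l < L.-1 then f l.+1 else f 0)).
  move=> i' l' il' ex; rewrite fe // in ex.
  case/orP: ex => [/eqP -> | /andP [/eqP -> /eqP ->]].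
  - by rewrite ifT ?eqxx //; arith.
  - by rewrite ltnn eqxx orbT.
case: (ltngtP i l) => [il|li|eil]; last by rewrite eil eirr in exy.
- by move: (key i l); rewrite il lL exy (negbTE ynx) (negbTE xny) => /(_ isT isT).
- by move: (key l i); rewrite li iL esym exy (negbTE ynx) (negbTE xny) => /(_ isT isT).
Qed.
End Chordless.

Lemma ex_minP (P : nat -> Prop) : (exists k, P k) -> exists k, P k /\ forall k', k' < k -> ~ P k'.
Proof.
move=> [k Pk]; suff: forall n k, k <= n -> P k -> exists k, P k /\ forall k', k' < k -> ~ P k'.
  by move/(_ k k (leqnn k) Pk).
elim=> [|n IH] k0 kn Pk0.
  by exists k0; split => // k' k'k; arith.
case: (classic (exists k', k' < k0 /\ P k')) => [[k' [k'k Pk']]|nok].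
  by apply: (IH k') => //; arith.
by exists k0; split => // k' k'k Pk'; apply: nok; exists k'.
Qed.

Lemma ex_maxP (P : nat -> bool) k : P 0 ->
  exists j, [/\ j <= k, P j & forall j', j < j' <= k -> ~~ P j'].
Proof.
move=> P0; elim: k => [|k [j [jk Pj hj]]].
  by exists 0; split => // j' /andP [h1 h2]; arith.
case Pk: (P k.+1).
  by exists k.+1; split => // j' /andP [h1 h2]; arith.
exists j; split => //; first by arith.
move=> j' /andP [h1 h2]; case: (ltngtP j' k.+1) => h3.
- by apply: hj; rewrite h1; arith.
- arith.
- by rewrite h3 Pk.
Qed.

Section Sep.
Variables (T : finType) (e : rel T).
Hypothesis esym : symmetric e.
Hypothesis eirr : irreflexive e.
Hypothesis econ : connected_graph e.
Hypothesis echord : chordal e.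

Definition eK (K : {set T}) : rel T := fun x y => [&& e x y, x \notin K & y \notin K].
Definition comp (K : {set T}) (a : T) := [set z | (z \notin K) && connect (eK K) a z].
Definition clique (K : {set T}) := {in K &, forall x y, x != y -> e x y}.

Lemma eK_sym (K : {set T}) : symmetric (eK K).
Proof. by move=> x y; rewrite /eK esym; case: (e y x); case: (x \in K); case: (y \in K). Qed.

Lemma comp_notK (K : {set T}) (a z : T) : z \in comp K a -> z \notin K.
Proof. by rewrite inE => /andP []. Qed.

Lemma comp_step (K : {set T}) (a x y : T) : x \in comp K a -> e x y -> y \notin K -> y \in comp K a.
Proof.
rewrite !inE => /andP [xK cax] exy yK; rewrite yK /=.
by apply: connect_trans cax (connect1 _); rewrite /eK exy xK yK.
Qed.

Lemma comp_self (K : {set T}) (a : T) : a \notin K -> a \in comp K a.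
Proof. by move=> aK; rewrite inE aK connect0. Qed.

Lemma comp_conn (K : {set T}) (a x y : T) : x \in comp K a -> y \in comp K a -> connect (eK K) x y.
Proof.
rewrite !inE => /andP [_ ax] /andP [_ ay].
by apply: connect_trans ay; rewrite (sym_connect_sym (eK_sym K)).
Qed.

Lemma complete_vertex (K : {set T}) (a : T) : clique K -> a \notin K ->
  exists2 x, x \in comp K a &
    {in [set k in K | [exists c in comp K a, e c k]], forall t, e x t}.
Proof.
move=> cK aK; set C := comp K a; set N := [set k in K | [exists c in C, e c k]].
have aC : a \in C by apply: comp_self.
pose F x := #|N :&: [set t | e x t]|.
case: (@arg_maxnP _ a (mem C) F aC) => x xC xmax.
case: (boolP [forall t in N, e x t]) => [/forall_inP h|].
  by exists x => // t /h.
rewrite negb_forall_in => /existsP [s /andP [sN nxs]].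
have sK : s \in K by move: sN; rewrite inE => /andP [].
have [c cC ecs] : exists2 c, c \in C & e c s.
  by move: sN; rewrite inE => /andP [_ /exists_inP [c cC ecs]]; exists c.
pose P k := exists p, [/\ p 0 = x, walk e p k, forall i, i <= k -> p i \in C & e (p k) s].
have exP : exists k, P k.
  have [m [p [_ p0 pm w]]] := connect_walk (comp_conn xC cC).
  have pC : forall i, i <= m -> p i \in C.
    elim=> [|i IH] im; first by rewrite p0.
    have := w i im; rewrite /eK => /and3P [epi _ pK].
    by apply: comp_step (IH (ltnW im)) epi pK.
  exists m, p; split => //; last by rewrite pm.
  by move=> i im; have := w i im => /and3P [].
have [k [[p [p0 w pC pks]] kmin]] := ex_minP exP.
have M1 : forall i, i < k -> ~~ e (p i) s.
  move=> i ik; apply/negP => epis; apply: (kmin i ik); exists p; split => //.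
  - by apply: walk_prefix w _; arith.
  - by move=> i' i'i; apply: pC; arith.
have M2 : forall i l, i.+1 < l <= k -> ~~ e (p i) (p l).
  move=> i l /andP [il lk]; apply/negP => epil.
  apply: (kmin (k - (l - i) + 1)); first arith.
  exists (fun n => if n <= i then p n else p (n + (l - i) - 1)); split.
  - by rewrite p0.
  - move=> n nk; case: (ltngtP n i) => ni.
    + by rewrite ?(ltnW ni) ?ni; apply: w; arith.
    + have -> : n.+1 + (l - i) - 1 = (n + (l - i) - 1).+1 by arith.
      by apply: w; arith.
    + rewrite -?ni ?leqnn ?ltnn; have -> : n.+1 + (l - n) - 1 = l by arith.
      by rewrite ni.
  - by move=> n nk; case: ifP => _; apply: pC; arith.
  - by rewrite ifF; [have -> : k - (l - i) + 1 + (l - i) - 1 = k by arith | arith].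
have pinj : forall i l, i < l <= k -> p i = p l -> False.
  move=> i l /andP [il lk] pil.
  case: (ltngtP l k) => lk'; last first.
  - by move: (M1 i (leq_trans il lk)); rewrite pil lk' pks.
  - arith.
  by have := M2 i l.+1 (ltac:(arith)); rewrite pil (w l lk').
have k1 : 0 < k by case: k {kmin M1 M2 pinj pC w} pks => //; rewrite p0 (negbTE nxs).
have key : forall t, t \in N -> e x t -> e (p k) t.
  move=> t tN ext; apply/negPn/negP => nkt.
  have tK : t \in K by move: tN; rewrite inE => /andP [].
  have [j [jk etj jmax]] := @ex_maxP (fun j => e t (p j)) k (ltac:(by rewrite /= p0 esym)).
  have jk' : j < k.
    case: (ltngtP j k) => // [kj|jk']; first arith.
    by move: nkt; rewrite -jk' esym etj.
  pose f i := if i == 0 then t else if i <= (k - j).+1 then p (j + i.-1) else s.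
  have pnK : forall i, i <= k -> p i \notin K by move=> i ik; apply: comp_notK (pC i ik).
  apply: (@no_chordless _ _ esym eirr echord f ((k - j).+3)); first by arith.
  - move=> i l /andP [il lL]; rewrite /f.
    case: (ltngtP l (k - j).+2) => lr; last first.
    + rewrite lr /= ltnn.
      case: ifP => [_ ts|_].
      * by move: nxs; rewrite -ts ext.
      * rewrite ifT; last by arith.
        move=> ps; have : j + i.-1 <= k by arith.
        by move/pnK; rewrite ps sK.
    + arith.
    have -> : (l == 0) = false by apply/eqP; arith.
    have lr' : l <= (k - j).+1 by arith.
    rewrite lr'; case: ifP => [_ tp|/negbT i0].
      have : j + l.-1 <= k by arith.
      by move/pnK; rewrite -tp tK.
    have i1 : 0 < i by rewrite lt0n.
    have ir : i <= (k - j).+1 by arith.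
    by rewrite ir; apply: pinj; arith.
  - move=> i l /andP [il lL]; rewrite /f /=.
    have -> : (l == 0) = false by apply/eqP; arith.
    case: (ltngtP l (k - j).+2) => lr; last first.
    + rewrite lr ltnn eqSS.
      case: (boolP (i == 0)) => [/eqP i0|i0].
        rewrite i0 /=; apply: cK => //; apply/eqP => ts.
        by move: nxs; rewrite -ts ext.
      have i1 : 0 < i by rewrite lt0n.
      have ir : i <= (k - j).+1 by arith.
      rewrite ir orbF.
      case: (boolP ((k - j).+1 == i)) => [/eqP ik|ik].
        by rewrite -ik /=; have -> : j + (k - j) = k by arith.
      apply/negbTE; apply: M1; move/eqP: ik => ik; arith.
    + arith.
    have lr' : l <= (k - j).+1 by arith.
    rewrite lr' ?andbF ?orbF.
    case: (boolP (i == 0)) => [/eqP i0|i0].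
      rewrite i0 /=; case: (boolP (l == 1)) => [/eqP l1|l1].
        by rewrite l1 /= addn0.
      apply/negbTE; apply: jmax; move/eqP: l1 => l1; arith.
    have i1 : 0 < i by rewrite lt0n.
    have ir : i <= (k - j).+1 by arith.
    rewrite ir; case: (boolP (l == i.+1)) => [/eqP li|li].
      have -> : j + l.-1 = (j + i.-1).+1 by arith.
      by apply: w; arith.
    apply/negbTE; apply: M2; move/eqP: li => li; arith.
have /proper_card : N :&: [set t | e x t] \proper N :&: [set t | e (p k) t].
  apply/properP; split.
    apply/subsetP => t /setIP [tN]; rewrite inE => ext.
    by rewrite in_setI tN inE (key t tN ext).
  exists s; first by rewrite in_setI sN inE pks.
  by rewrite in_setI sN inE (negbTE nxs).
move=> lt; have h := xmax (p k) (pC k (leqnn k)); move: h lt; rewrite /F /geq /=; clear; lia.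
Qed.

Lemma separator (I : {set T}) :
  exists K, clique K /\ forall a, a \notin K -> 2 * #|I :&: comp K a| <= #|I|.
Proof.
suff: forall m K, clique K ->
    (forall a, a \notin K -> #|I| < 2 * #|I :&: comp K a| -> #|comp K a| <= m) ->
    exists K, clique K /\ forall a, a \notin K -> 2 * #|I :&: comp K a| <= #|I|.
  move/(_ #|T| set0); apply => //; last by move=> *; apply: max_card.
  by move=> x y; rewrite inE.
elim=> [|m IH] K cK hm.
  case: (boolP [forall a, (a \notin K) ==> (2 * #|I :&: comp K a| <= #|I|)]).
    by move/forallP => h; exists K; split => // a aK; move: (h a); rewrite aK.
  rewrite negb_forall => /existsP [a]; rewrite negb_imply -ltnNge => /andP [aK big].
  move: (hm a aK big); rewrite leqn0 => /eqP /cards0_eq C0.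
  by move: (comp_self aK); rewrite C0 inE.
case: (boolP [forall a, (a \notin K) ==> (2 * #|I :&: comp K a| <= #|I|)]).
  by move/forallP => h; exists K; split => // a aK; move: (h a); rewrite aK.
rewrite negb_forall => /existsP [a]; rewrite negb_imply -ltnNge => /andP [aK big].
set C := comp K a; set N := [set k in K | [exists c in C, e c k]].
have [x xC xN] := complete_vertex cK aK.
have xK : x \notin K by apply: comp_notK xC.
have NK : N \subset K by apply/subsetP => k; rewrite inE => /andP [].
apply: (IH (x |: N)).
  rewrite /clique => u0 v0; rewrite !in_setU1 => /orP [/eqP ->|uN] /orP [/eqP ->|vN]; rewrite ?eqxx //.
  - by move=> _; apply: xN.
  - by move=> _; rewrite esym; apply: xN.
  - by apply: cK; apply: (subsetP NK).
have cl : forall z y, z \in C -> eK (x |: N) z y -> y \in C.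
  move=> z y zC /and3P [ezy _ yK']; apply: (comp_step zC ezy).
  apply/negP => yK; move: yK'; rewrite !inE negb_or => /andP [_].
  by rewrite yK; move/negP; apply; apply/existsP; exists z; rewrite zC.
have clC : closed (eK (x |: N)) C.
  move=> z y ezy; apply/idP/idP; first by move/cl; apply.
  by move/cl; apply; rewrite eK_sym.
move=> a' a'K big'.
case: (boolP (a' \in C)) => a'C.
  have sub : comp (x |: N) a' \subset C :\ x.
    apply/subsetP => z; rewrite inE => /andP [zK' cz].
    rewrite in_setD1 -(closed_connect clC cz) a'C andbT.
    by apply: contra zK' => /eqP ->; rewrite setU11.
  have := subset_leq_card sub; have := cardsD1 x C; rewrite xC.
  have := hm a aK big; rewrite -/C; lia.
have disj : [disjoint I :&: comp (x |: N) a' & I :&: C].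
  rewrite -setI_eq0; apply/eqP/setP => z; rewrite !in_setI in_set0.
  apply/negP => /andP [/andP [_ hz] /andP [_ zC]].
  move: hz; rewrite /comp inE => /andP [_ cz].
  by move: a'C; rewrite (closed_connect clC cz) zC.
have : #|(I :&: comp (x |: N) a') :|: (I :&: C)| <= #|I|.
  by apply: subset_leq_card; rewrite subUset !subsetIl.
rewrite cardsU (disjoint_setI0 disj) cards0 subn0; move: big big'; rewrite -/C; lia.
Qed.

End Sep.

Lemma bigmin_le (I : finType) (P : pred I) (F : I -> nat) x0 i : P i -> \big[minn/x0]_(j | P j) F j <= F i.
Proof.
move=> Pi; have : i \in index_enum I by rewrite mem_index_enum.
elim: (index_enum I) => [|a r IH] //; rewrite inE big_cons.
case/orP => [/eqP <-|ir]; first by rewrite Pi geq_minl.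
case: ifP => _; last exact: IH.
by rewrite (leq_trans (geq_minr _ _)) // IH.
Qed.

Lemma card_bigcup_le (T I : finType) (A : pred I) (F : I -> {set T}) :
  #|\bigcup_(i | A i) F i| <= \sum_(i | A i) #|F i|.
Proof.
elim/big_rec2: _ => [|i x n _ h]; first by rewrite cards0.
by rewrite (leq_trans (leq_card_setU _ _).1) // leq_add2l.
Qed.

Section Cover.
Variables (T : finType) (e : rel T).
Hypothesis esym : symmetric e.
Hypothesis eirr : irreflexive e.
Hypothesis econ : connected_graph e.
Hypothesis echord : chordal e.

Definition Yset (K : {set T}) := [set y | [exists s in K, (s == y) || e s y]].
Definition coverI (I : {set T}) (X : {set T * T}) :=
  [forall P in NE e, (P \subset I) ==> [exists p in X, P \in S e p.1 p.2]].
Definition cst := (max_degree e).+1 ^ 2.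
Definition gb n := cst * n * (trunc_log 2 n).+1.

Lemma deg_le v : #|[set w | e v w]| <= max_degree e.
Proof. exact: (leq_bigmax (F := fun v => #|[set w | e v w]|)). Qed.

Lemma Yset_card (K : {set T}) : clique e K -> #|Yset K| <= cst.
Proof.
move=> cK; case: (set_0Vmem K) => [->|[k0 k0K]].
  rewrite (_ : Yset set0 = set0) ?cards0 //.
  by apply/setP => y; rewrite !inE; apply/existsP => -[s]; rewrite inE.
have cardK : #|K| <= (max_degree e).+1.
  have : K \subset k0 |: [set w | e k0 w].
    apply/subsetP => s sK; rewrite !inE; case: (eqVneq s k0) => //= sk.
    by apply: cK => //; rewrite eq_sym.
  move/subset_leq_card => h; apply: (leq_trans h).
  by rewrite (leq_trans (leq_card_setU _ _).1) // cards1 add1n ltnS deg_le.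
have : Yset K \subset \bigcup_(s in K) (s |: [set w | e s w]).
  apply/subsetP => y; rewrite inE => /exists_inP [s sK sy].
  apply/bigcupP; exists s => //; rewrite !inE eq_sym.
  by case/orP: sy => [->|->] //; rewrite orbT.
move/subset_leq_card => h; apply: (leq_trans h); apply: (leq_trans (card_bigcup_le _ _)).
apply: (@leq_trans (\sum_(s in K) (max_degree e).+1)).
  apply: leq_sum => s _; rewrite (leq_trans (leq_card_setU _ _).1) //.
  by rewrite cards1 add1n ltnS deg_le.
by rewrite sum_nat_const /cst expnS expn1 leq_mul2r cardK orbT.
Qed.

Lemma walk_conn (K : {set T}) p m : walk e p m -> (forall i, i <= m -> p i \notin K) ->
  connect (eK e K) (p 0) (p m).
Proof.
elim: m => [|m IH] w hK; first exact: connect0.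
apply: connect_trans (IH (walk_prefix w (leqnSn m)) (fun i im => hK i (leqW im))) _.
by apply: connect1; rewrite /eK w // !hK.
Qed.

Lemma cross (K : {set T}) (a b sb : T) : a \notin K -> b \notin K -> ~~ connect (eK e K) a b -> sb \in K ->
  (forall s, s \in K -> dist e b sb <= dist e a s) ->
  (forall s, s \in K -> dist e b sb <= dist e b s) ->
  exists2 y, y \in Yset K & dist e b y + 1 < dist e a y.
Proof.
move=> aK bK nab sbK hab hb.
set k := dist e b sb.
have [r [r0 rk w]] := dist_geo econ b sb; rewrite -/k in rk w.
have k1 : 0 < k by case: k r0 rk {w hab hb} => // r0 rk; move: bK; rewrite -r0 rk sbK.
have rK : forall i, i < k -> r i \notin K.
  move=> i ik; apply/negP => riK.
  have := dist_le r0 (erefl (r i)) (walk_prefix w (ltnW ik)).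
  by have := hb _ riK; rewrite -/k; lia.
set y := r k.-1.
have eys : e y sb by rewrite /y -rk; have := w k.-1; rewrite prednK //; apply; lia.
have yK : y \notin K by apply: rK; lia.
have cby : connect (eK e K) b y.
  rewrite -r0 /y; apply: walk_conn; first by apply: walk_prefix w _; lia.
  by move=> i ik; apply: rK; lia.
have dby : dist e b y <= k.-1 by apply: (dist_le r0 (erefl _)); apply: walk_prefix w _; lia.
have [q [q0 qL wq]] := dist_geo econ a y.
set L := dist e a y in qL wq *.
have [j [jL qjK]] : exists j, j <= L /\ q j \in K.
  apply: NNPP => hn; move/negP: nab; apply.
  apply: (connect_trans (y := y)); last by rewrite (sym_connect_sym (eK_sym esym K)).
  rewrite -q0 -qL; apply: walk_conn => // i iL; apply/negP => qiK; apply: hn; by exists i.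
have jL' : j < L by case: (ltngtP j L) => // jL'; [lia | move: yK; rewrite -qL -jL' qjK].
have := dist_le q0 (erefl (q j)) (walk_prefix wq (ltnW jL')).
have := hab _ qjK; rewrite -/k.
exists y; last by lia.
by rewrite inE; apply/existsP; exists sb; rewrite sbK esym eys orbT.
Qed.

End Cover.

Section Main.
Variables (T : finType) (e : rel T).
Hypothesis esym : symmetric e.
Hypothesis eirr : irreflexive e.
Hypothesis econ : connected_graph e.
Hypothesis echord : chordal e.

Lemma NE_mem P : P \in NE e -> exists a b, [/\ P = [set a; b], a != b & ~~ e a b].
Proof.
by rewrite inE => /existsP [a /existsP [b /and3P [/eqP -> ab nab]]]; exists a, b.
Qed.

Lemma S_intro u v a b : [set a; b] \in NE e -> dist e u a + dist e b v + 1 < dist e u v ->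
  [set a; b] \in S e u v.
Proof.
move=> hN hd; rewrite inE hN /=; apply/existsP; exists a; apply/existsP; exists b.
by rewrite eqxx hd.
Qed.

Lemma trunc_log_half j n : 0 < j -> 2 * j <= n -> (trunc_log 2 j).+1 <= trunc_log 2 n.
Proof.
move=> j0 jn; apply: trunc_log_max => //.
by rewrite expnS (leq_trans _ jn) // leq_mul2l /= trunc_logP.
Qed.

Lemma cover_all m (I : {set T}) : #|I| <= m -> exists X, coverI e I X && (#|X| <= gb e #|I|).
Proof.
elim: m I => [|m IH] I.
  rewrite leqn0 => /eqP /cards0_eq ->; exists set0; rewrite cards0 leq0n andbT.
  apply/forall_inP => P /NE_mem [a [b [-> _ _]]]; apply/implyP => /subsetP /(_ a).
  by rewrite !inE eqxx => /(_ isT).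
move=> Im.
have [K [cK hK]] := separator esym eirr echord I.
pose good J X := coverI e J X && (#|X| <= gb e #|J|).
pose Ch := [set I :&: comp e K a | a in I :\: K].
pose XJ J := odflt set0 [pick X | good J X].
have XJgood : forall J, J \in Ch -> good J (XJ J).
  move=> J /imsetP [a /setDP [aI aK] ->].
  have [X hX] : exists X, good (I :&: comp e K a) X.
    by apply: IH; have := hK a aK; lia.
  rewrite /XJ; case: pickP => [X' //|/(_ X)]; by rewrite hX.
pose X := setX I (Yset e K) :|: \bigcup_(J in Ch) XJ J.
have KY : forall s, s \in K -> s \in Yset e K.
  by move=> s sK; rewrite inE; apply/existsP; exists s; rewrite sK eqxx.
have inXI : forall u y, u \in I -> y \in Yset e K -> (u, y) \in X.
  by move=> u y uI yY; rewrite /X inE; apply/orP; left; rewrite in_setX uI yY.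
exists X; apply/andP; split.
  apply/forall_inP => P PN; apply/implyP => PI.
  have [a [b [Pab ab nab]]] := NE_mem PN; subst P.
  have aI : a \in I by apply: (subsetP PI); rewrite !inE eqxx.
  have bI : b \in I by apply: (subsetP PI); rewrite !inE eqxx orbT.
  have swap : [set a; b] = [set b; a] by apply/setP => z; rewrite !inE orbC.
  have fin : forall u v, (u, v) \in X -> [set a; b] \in S e u v ->
      [exists p in X, [set a; b] \in S e p.1 p.2].
    by move=> u v uvX h; apply/exists_inP; exists (u, v).
  have ba : b != a by rewrite eq_sym.
  have nba : ~~ e b a by rewrite esym.
  case: (boolP (a \in K)) => aK.
    apply: (fin b a); first exact: inXI bI (KY _ aK).
    rewrite swap; apply: S_intro; first by rewrite -swap.
    by rewrite !dist0; have := dist_ge2 econ ba nba; lia.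
  case: (boolP (b \in K)) => bK.
    apply: (fin a b); first exact: inXI aI (KY _ bK).
    apply: S_intro => //.
    by rewrite !dist0; have := dist_ge2 econ ab nab; lia.
  case: (boolP (connect (eK e K) a b)) => cab.
    set J := I :&: comp e K a.
    have JC : J \in Ch by apply/imsetP; exists a => //; rewrite inE aK aI.
    have /andP [cJ _] := XJgood J JC.
    have sJ : [set a; b] \subset J.
      apply/subsetP => z; rewrite !inE => /orP [] /eqP ->.
      - by rewrite aI aK connect0.
      - by rewrite bI bK cab.
    move/forall_inP: cJ => /(_ _ PN); rewrite sJ /= => /exists_inP [p pX pS].
    apply/exists_inP; exists p => //; rewrite /X inE; apply/orP; right.
    by apply/bigcupP; exists J.
  case: (set_0Vmem K) => [K0|[s0 s0K]].
    move/negP: cab; case; have [q [q0 qd wq]] := dist_geo econ a b.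
    by rewrite -q0 -qd; apply: walk_conn => // i _; rewrite K0 inE.
  case: (@arg_minnP _ s0 (mem K) (fun s => dist e a s) s0K) => sa saK samin.
  case: (@arg_minnP _ s0 (mem K) (fun s => dist e b s) s0K) => sb sbK sbmin.
  case: (leqP (dist e b sb) (dist e a sa)) => hab.
    have [y yY hy] := cross esym econ aK bK cab sbK
      (fun s sK => leq_trans hab (samin s sK)) sbmin.
    apply: (fin a y); first exact: inXI aI yY.
    by apply: S_intro => //; rewrite dist0.
  have cba : ~~ connect (eK e K) b a by rewrite (sym_connect_sym (eK_sym esym K)).
  have [y yY hy] := cross esym econ bK aK cba saK
      (fun s sK => leq_trans (ltnW hab) (sbmin s sK)) samin.
  apply: (fin b y); first exact: inXI bI yY.
  rewrite swap; apply: S_intro; first by rewrite -swap.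
  by rewrite dist0.
have triv : trivIset Ch.
  apply/trivIsetP => J1 J2 /imsetP [a1 _ ->] /imsetP [a2 _ ->] neq.
  rewrite -setI_eq0; apply/eqP/setP => z; rewrite in_set0; apply/negP => /setIP [].
  rewrite !in_setI /comp !inE => /andP [_ /andP [_ c1]] /andP [_ /andP [_ c2]].
  have csym := sym_connect_sym (eK_sym esym K).
  have c12 : connect (eK e K) a1 a2 by apply: connect_trans c1 _; rewrite csym.
  move: neq; rewrite (_ : comp e K a1 = comp e K a2) ?eqxx //.
  apply/setP => w; rewrite !inE; congr (_ && _); apply/idP/idP => h.
  - by apply: connect_trans h; rewrite csym.
  - exact: connect_trans c12 h.
have sumJ : \sum_(J in Ch) #|J| <= #|I|.
  move/eqP: triv => ->; apply: subset_leq_card.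
  by apply/bigcupsP => J /imsetP [a _ ->]; apply: subsetIl.
set t := trunc_log 2 #|I|.
have sumX : \sum_(J in Ch) #|XJ J| <= cst e * t * #|I|.
  apply: (@leq_trans (\sum_(J in Ch) (cst e * t) * #|J|)); last first.
    by rewrite -big_distrr /=; apply: leq_mul (leqnn _) sumJ.
  apply: leq_sum => J JC; have /andP [_ hJ] := XJgood J JC.
  apply: (leq_trans hJ); rewrite /gb.
  case: (posnP #|J|) => [->|J0]; first by rewrite !muln0 mul0n.
  have : (trunc_log 2 #|J|).+1 <= t.
    apply: trunc_log_half => //.
    by move: JC => /imsetP [a /setDP [_ aK] ->]; apply: hK.
  by move=> h; rewrite mulnAC; apply: leq_mul => //; apply: leq_mul.
have cY := Yset_card cK.
rewrite /X (leq_trans (leq_card_setU _ _).1) //.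
apply: (@leq_trans (#|I| * cst e + cst e * t * #|I|)).
  apply: leq_add; last exact: (leq_trans (card_bigcup_le _ _) sumX).
  by rewrite cardsX leq_mul2l cY orbT.
by rewrite /gb -/t mulnS; nia.
Qed.

End Main.

Theorem mainTheorem10 :
  exists C : nat, forall (T : finType) (e : rel T),
    symmetric e -> irreflexive e -> connected_graph e -> chordal e ->
    OPT e <= C * (max_degree e) ^ 2 * #|T| * trunc_log 2 #|T|.
Proof.
exists 8 => T e esym eirr econ echord.
have optle : forall X, covers e X -> OPT e <= #|X| by move=> X cX; apply: bigmin_le.
case: (leqP #|T| 1) => n1.
  apply: leq_trans (optle set0 _) _; last by rewrite cards0.
  rewrite /covers; apply/eqP/setP => P; rewrite big_set0 in_set0; symmetry; apply/negbTE/negP.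
  case/NE_mem => a [b [_ ab _]].
  have : #|[set a; b]| <= #|T| by apply: max_card.
  by rewrite cards2 ab; lia.
have [X /andP [cX hX]] := cover_all esym eirr econ echord (leqnn #|[set: T]|).
have covX : covers e X.
  apply/eqP/setP => P; apply/idP/idP.
    by case/bigcupP => p _; rewrite inE => /andP [].
  move=> PN; move/forall_inP: cX => /(_ P PN); rewrite subsetT /= => /exists_inP [p pX pS].
  by apply/bigcupP; exists p.
have := leq_trans (optle X covX) hX; rewrite /gb /cst cardsT.
have [u _] : exists u : T, True.
  by case: (set_0Vmem [set: T]) => [h|[u _]]; [move: n1; rewrite -cardsT h cards0 | exists u].
have D1 : 0 < max_degree e.
  have [v uv] : exists v, v != u.
    apply/existsP; rewrite -negb_forall; apply/negP => /forallP h.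
    have : [set: T] \subset [set u] by apply/subsetP => z _; rewrite inE -[z == u]negbK h.
    by move/subset_leq_card; rewrite cardsT cards1; lia.
  have [m [p [_ p0 pm w]]] := connect_walk (econ u v).
  have m0 : 0 < m by case: m pm {w} => // pm; move: uv; rewrite -pm p0 eqxx.
  apply: (leq_trans _ (deg_le e u)); rewrite card_gt0; apply/set0Pn; exists (p 1).
  by rewrite inE -p0; apply: w.
have L1 : 0 < trunc_log 2 #|T| by apply: trunc_log_max.
set D := max_degree e; set L := trunc_log 2 #|T|; set n := #|T|.
move=> h; apply: (leq_trans h).
have h1 : D.+1 ^ 2 <= 4 * D ^ 2 by rewrite !expnS !expn0; nia.
have h2 : L.+1 <= 2 * L by lia.
rewrite (_ : 8 * D ^ 2 * n * L = (4 * D ^ 2) * n * (2 * L)); last by nia.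
by apply: leq_mul => //; apply: leq_mul.
Qed.
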